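(* Let $T$ be a correlation-free parity decision tree on $\{-1,1\}^n$ of depth $d$. Then $\mathbf{E}_{\ell\in T}\big(\sum_{i=1}^n \ell_i\big)^2\le d$.
   Context: A parity decision tree on $\{-1,1\}^n$ is a rooted full binary tree whose internal nodes are labelled by subsets $S\subseteq[n]$, whose two outgoing edges are labelled $-1$ and $1$; an input $x$ follows from a node labelled $S$ the edge labelled $\prod_{i\in S}x_i$. Depth is the maximum number of internal nodes on a root-to-leaf path. A quantity (such as $x_i$ or $x_i\oplus x_j$) is fixed by the queries on a path if it is determined by the answers to the parities queried along that path. $T$ is (pairwise) correlation-free if for every $i\ne j\in[n]$ and every path in $T$, whenever $x_i\oplus x_j$ is fixed by the queries in the path, so are $x_i$ and $x_j$. Each leaf is represented as a vector $\ell\in\{-1,0,1\}^n$ with $\ell_i$ the expected value of $x_i$ over uniformly random inputs reaching that leaf; $\mathbf{E}_{\ell\in T}$ is the expectation over the leaf reached by a uniformly random input. *)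

(* Defs.v *)
From HB Require Import structures.
From mathcomp Require Import all_boot all_order all_algebra.
Set Implicit Arguments. Unset Strict Implicit. Unset Printing Implicit Defensive.
Import Order.TTheory GRing.Theory Num.Theory.
Local Open Scope ring_scope.

(* Inputs x in {-1,1}^n are encoded as boolean vectors: x_i = sgn (x i),
   where true encodes -1 and false encodes 1. *)
Definition input (n : nat) := {ffun 'I_n -> bool}.

Definition sgn (b : bool) : rat := if b then -1 else 1.

Definition parity n (S : {set 'I_n}) (x : input n) : rat :=
  \prod_(i in S) sgn (x i).

(* Parity decision trees: an internal node is labelled by S and has a child
   along the edge labelled -1 (first) and one along the edge labelled 1. *)
Inductive pdt (n : nat) : Type :=
| Leaf : pdt n
| Node : {set 'I_n} -> pdt n -> pdt n -> pdt n.

Fixpoint depth n (T : pdt n) : nat :=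
  match T with
  | Leaf => 0
  | Node _ tm tp => (maxn (depth tm) (depth tp)).+1
  end.

(* A path from the root is a sequence of edge labels; true = edge -1,
   false = edge 1. *)
Definition child n (b : bool) (tm tp : pdt n) := if b then tm else tp.

Fixpoint valid_path n (T : pdt n) (p : seq bool) : bool :=
  match T, p with
  | _, [::] => true
  | Node _ tm tp, b :: p' => valid_path (child b tm tp) p'
  | Leaf, _ :: _ => false
  end.

Fixpoint path_queries n (T : pdt n) (p : seq bool) : seq {set 'I_n} :=
  match T, p with
  | Node Sq tm tp, b :: p' => Sq :: path_queries (child b tm tp) p'
  | _, _ => [::]
  end.

Definition fixed n (Q : seq {set 'I_n}) (f : input n -> bool) : Prop :=
  forall x y : input n, (forall S, S \in Q -> parity S x = parity S y) ->
    f x = f y.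

Definition correlation_free n (T : pdt n) : Prop :=
  forall p : seq bool, valid_path T p ->
  forall i j : 'I_n, i != j ->
    fixed (path_queries T p) (fun x => x i (+) x j) ->
    fixed (path_queries T p) (fun x => x i) /\
    fixed (path_queries T p) (fun x => x j).

Fixpoint leaf_of n (T : pdt n) (x : input n) : seq bool :=
  match T with
  | Leaf => [::]
  | Node Sq tm tp =>
      let b := parity Sq x == -1 in b :: leaf_of (child b tm tp) x
  end.

(* The vector ell of the leaf reached by x: ell_i is the expected value of
   x_i over uniformly random inputs reaching that leaf. *)
Definition leaf_vec n (T : pdt n) (x : input n) (i : 'I_n) : rat :=
  (\sum_(y : input n | leaf_of T y == leaf_of T x) sgn (y i))
  / #|[set y : input n | leaf_of T y == leaf_of T x]|%:R.

Definition leaf_sq_expectation n (T : pdt n) : rat :=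
  (\sum_(x : input n) (\sum_(i < n) leaf_vec T x i) ^+ 2) / (2 ^ n)%:R.

(* Main.v *)
Require Import Defs.
From mathcomp Require Import all_boot all_order all_algebra.
From mathcomp Require Import ring lra.
Set Implicit Arguments. Unset Strict Implicit. Unset Printing Implicit Defensive.
Import Order.TTheory GRing.Theory Num.Theory.
Local Open Scope ring_scope.

Section Aux.
Variable n : nat.
Implicit Types (x y u v d : input n) (S : {set 'I_n}) (P Q : seq {set 'I_n}).

Definition pb S x : bool := \big[addb/false]_(i in S) x i.

Lemma sgn_addb a b : sgn (a (+) b) = sgn a * sgn b.
Proof. by case: a; case: b; rewrite /sgn /= ?mulN1r ?opprK ?mul1r ?mulr1. Qed.

Lemma sgn_inj a b : sgn a = sgn b -> a = b.
Proof. by case: a; case: b => //= /eqP. Qed.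

Lemma sgn_neg b : sgn (~~ b) = - sgn b.
Proof. by case: b; rewrite /sgn /= ?opprK. Qed.

Lemma sgn_sq b : sgn b ^+ 2 = 1.
Proof. by case: b; rewrite /sgn /= ?sqrrN expr1n. Qed.

Lemma sgnE b : (sgn b == -1) = b.
Proof. by case: b. Qed.

Lemma parity_pb S x : parity S x = sgn (pb S x).
Proof. by rewrite /parity /pb (big_morph sgn sgn_addb (erefl (sgn false))). Qed.

Definition xr x d : input n := [ffun k => x k (+) d k].

Lemma pb_xr S x d : pb S (xr x d) = pb S x (+) pb S d.
Proof.
rewrite /pb -big_split /=; apply: eq_bigr => i _; by rewrite ffunE.
Qed.

Lemma xrK d : involutive (xr ^~ d).
Proof. by move=> x; apply/ffunP => k; rewrite !ffunE addbK. Qed.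

Definition sameP Q x y := all (fun S => pb S x == pb S y) Q.

Lemma sameP_refl Q x : sameP Q x x.
Proof. by apply/allP. Qed.
Lemma sameP_sym Q x y : sameP Q x y = sameP Q y x.
Proof. by apply: eq_all => S; rewrite eq_sym. Qed.
Lemma sameP_trans Q x y z : sameP Q x y -> sameP Q y z -> sameP Q x z.
Proof. by move=> /allP H1 /allP H2; apply/allP => S HS; rewrite (eqP (H1 S HS)) H2. Qed.

Lemma sameP_rcons P S x y : sameP (rcons P S) x y = (pb S x == pb S y) && sameP P x y.
Proof. by rewrite /sameP all_rcons. Qed.

Lemma sameP_cat P Q x y : sameP (P ++ Q) x y = sameP P x y && sameP Q x y.
Proof. by rewrite /sameP all_cat. Qed.

Lemma fixedE Q (f : input n -> bool) :
  fixed Q f <-> (forall x y, sameP Q x y -> f x = f y).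
Proof.
split=> H x y Hs; apply: H.
  by move=> S HS; rewrite !parity_pb; move/allP: Hs => /(_ S HS)/eqP ->.
by apply/allP => S HS; have := Hs S HS; rewrite !parity_pb => /sgn_inj ->.
Qed.

Definition fx Q (i : 'I_n) : bool :=
  [forall x, [forall y, sameP Q x y ==> (x i == y i)]].

Lemma fxP Q i : reflect (forall x y, sameP Q x y -> x i = y i) (fx Q i).
Proof.
apply: (iffP idP).
  by move=> /forallP H x y Hs; move/forallP: (H x) => /(_ y); rewrite Hs => /eqP.
by move=> H; apply/forallP => x; apply/forallP => y; apply/implyP => /H ->.
Qed.

Lemma fxE Q i : fixed Q (fun x => x i) <-> fx Q i.
Proof. by rewrite fixedE; split => [H|/fxP //]; apply/fxP. Qed.

Lemma notfx Q i : ~~ fx Q i -> exists u v, sameP Q u v /\ u i != v i.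
Proof.
move=> /forallPn [u] /forallPn [v]; rewrite negb_imply => /andP[H1 H2].
by exists u, v.
Qed.

Lemma sameP_flip Q u v x : sameP Q u v -> sameP Q x (xr (xr x u) v).
Proof.
move=> /allP H; apply/allP => S HS; rewrite !pb_xr (eqP (H S HS)).
by rewrite -addbA addbb addbF.
Qed.

Lemma flip_sum Q i (K : pred (input n)) (h : input n -> rat) :
  ~~ fx Q i ->
  (forall x y, sameP Q x y -> K x = K y) ->
  (forall x y, sameP Q x y -> h x = h y) ->
  \sum_(x | K x) h x * sgn (x i) = 0.
Proof.
move=> /notfx [u [v [Huv Hi]]] HK Hh.
set s := (LHS).
have inj : injective (fun x => xr (xr x u) v).
  by move=> x y /= /(can_inj (xrK v)) /(can_inj (xrK u)).
have : s = - s.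
  rewrite {1}/s (reindex_inj inj) /s -sumrN; apply: eq_big => x.
    by rewrite -(HK _ _ (sameP_flip x Huv)).
  move=> _; rewrite -(Hh _ _ (sameP_flip x Huv)) !ffunE -addbA.
  have -> : u i (+) v i = true by case: (u i) (v i) Hi => [] [].
  by rewrite addbT sgn_neg mulrN.
move=> H; lra.
Qed.

Lemma flip_val Q S i x y :
  ~~ fx Q i -> fx (rcons Q S) i -> sameP Q x y -> pb S x != pb S y ->
  y i = ~~ x i.
Proof.
move=> /notfx [u [v [Huv Hi]]] /fxP Hf Hxy HS.
have Huvi : u i (+) v i = true by case: (u i) (v i) Hi => [] [].
have Hx' : (xr (xr x u) v) i = ~~ x i by rewrite !ffunE -addbA Huvi addbT.
have Suv : pb S u (+) pb S v = true.
  apply: negbNE; apply/negP => Heq.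
  have : sameP (rcons Q S) x (xr (xr x u) v).
    rewrite sameP_rcons sameP_flip // andbT !pb_xr -addbA.
    by move/negbTE: Heq => ->; rewrite addbF.
  by move/Hf; rewrite Hx'; case: (x i).
rewrite -Hx'; symmetry; apply: Hf.
rewrite sameP_rcons; apply/andP; split.
  rewrite !pb_xr -addbA Suv addbT.
  by move: HS; case: (pb S x); case: (pb S y).
by rewrite sameP_sym; apply: sameP_trans (sameP_flip x Huv); rewrite sameP_sym.
Qed.


Definition A Q x : rat := \sum_(i < n | fx Q i) sgn (x i).

Lemma fx_rcons P S i : fx P i -> fx (rcons P S) i.
Proof.
move=> /fxP H; apply/fxP => x y; rewrite sameP_rcons => /andP[_]; exact: H.
Qed.

Lemma A_closed P x y : sameP P x y -> A P x = A P y.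
Proof. by move=> Hs; apply: eq_bigr => i /fxP H; rewrite (H x y). Qed.

Lemma no_two P S :
  (forall i j : 'I_n, i != j -> fixed P (fun x => x i (+) x j) ->
     fixed P (fun x => x i) /\ fixed P (fun x => x j)) ->
  forall i j, fx (rcons P S) i -> ~~ fx P i -> fx (rcons P S) j -> ~~ fx P j -> i = j.
Proof.
move=> CF i j Hi Ni Hj Nj; case: (eqVneq i j) => // ne; exfalso.
have Hx : fixed P (fun x => x i (+) x j).
  apply/fixedE => x y Hxy.
  case: (eqVneq (pb S x) (pb S y)) => [e | ne'].
    have Hr : sameP (rcons P S) x y by rewrite sameP_rcons e eqxx.
    by rewrite ((fxP _ _ Hi) _ _ Hr) ((fxP _ _ Hj) _ _ Hr).
  rewrite (flip_val Ni Hi Hxy ne') (flip_val Nj Hj Hxy ne').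
  by case: (x i); case: (x j).
have [/fxE H _] := CF i j ne Hx.
by move: Ni; rewrite H.
Qed.

Lemma keyD P S (K : pred (input n)) :
  (forall i j : 'I_n, i != j -> fixed P (fun x => x i (+) x j) ->
     fixed P (fun x => x i) /\ fixed P (fun x => x j)) ->
  (forall x y, sameP P x y -> K x = K y) ->
  \sum_(x | K x) A (rcons P S) x ^+ 2 <= \sum_(x | K x) (A P x ^+ 2 + 1).
Proof.
move=> CF HK.
pose nw i := fx (rcons P S) i && ~~ fx P i.
pose E x := \sum_(i < n | nw i) sgn (x i).
have HA : forall x, A (rcons P S) x = A P x + E x.
  move=> x; rewrite /A (bigID (fun i => fx P i)) /=; congr (_ + _).
  by apply: eq_bigl => i; case H: (fx P i); rewrite ?andbT ?andbF ?fx_rcons.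
have HE : forall x, E x ^+ 2 <= 1.
  move=> x; rewrite /E; case: (pickP nw) => [i Hi | H0].
    rewrite (bigD1 i) //= big1 ?addr0 ?sgn_sq //.
    move=> j /andP[Hj nej]; exfalso; move: nej.
    move: Hi Hj; rewrite /nw => /andP[Hi Ni] /andP[Hj Nj].
    by rewrite (no_two CF Hi Ni Hj Nj) eqxx.
  by rewrite big_pred0 // expr0n.
have H0 : \sum_(x | K x) A P x * E x = 0.
  rewrite /E; under eq_bigr do rewrite mulr_sumr.
  rewrite exchange_big /=; apply: big1 => i /andP[_ Ni].
  exact: flip_sum Ni HK (@A_closed P).
have -> : \sum_(x | K x) A (rcons P S) x ^+ 2 =
   \sum_(x | K x) (A P x ^+ 2 + E x ^+ 2) + 2 * \sum_(x | K x) A P x * E x.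
  rewrite mulr_sumr -big_split /=; apply: eq_bigr => x _; rewrite HA; ring.
by rewrite H0 mulr0 addr0; apply: ler_sum => x _; rewrite lerD2l.
Qed.


Definition CFrel P (T : pdt n) := forall p, valid_path T p -> forall i j : 'I_n, i != j ->
  fixed (P ++ path_queries T p) (fun x => x i (+) x j) ->
  fixed (P ++ path_queries T p) (fun x => x i) /\
  fixed (P ++ path_queries T p) (fun x => x j).

Lemma keyC (T : pdt n) : forall P (K : pred (input n)), CFrel P T ->
  (forall x y, sameP P x y -> K x = K y) ->
  \sum_(x | K x) A (P ++ path_queries T (leaf_of T x)) x ^+ 2 <=
  \sum_(x | K x) (A P x ^+ 2 + (depth T)%:R).
Proof.
elim: T => [|S tm IHm tp IHp] P K CF HK /=.
  by apply: ler_sum => x _; rewrite cats0 lerDl.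
have CF0 : forall i j : 'I_n, i != j -> fixed P (fun x => x i (+) x j) ->
     fixed P (fun x => x i) /\ fixed P (fun x => x j).
  by move=> i j ne; have := CF [::] erefl i j ne; rewrite /= cats0.
have CFb : forall b, CFrel (rcons P S) (child b tm tp).
  move=> b p Hp i j ne; have := CF (b :: p) Hp i j ne.
  by rewrite /= cat_rcons.
have HKb : forall b, forall x y, sameP (rcons P S) x y ->
    (K x && ((parity S x == -1) == b)) = (K y && ((parity S y == -1) == b)).
  move=> b x y; rewrite sameP_rcons => /andP[/eqP e Hs].
  by rewrite !parity_pb !sgnE e (HK _ _ Hs).
pose D := maxn (depth tm) (depth tp).
apply: (@le_trans _ _ (\sum_(x | K x) (A (rcons P S) x ^+ 2 + D%:R))).
  rewrite [X in X <= _](bigID (fun x => parity S x == -1)) [X in _ <= X](bigID (fun x => parity S x == -1)) /=.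
  apply: lerD.
    apply: (@le_trans _ _ (\sum_(x | K x && ((parity S x == -1) == true)) (A (rcons P S) x ^+ 2 + (depth tm)%:R))).
      rewrite (eq_bigl (fun x => K x && ((parity S x == -1) == true))); last by move=> x; rewrite eqb_id.
      have := IHm (rcons P S) _ (CFb true) (HKb true).
      set L := (X in X <= _ -> _); set R := (X in _ <= X -> _) => H.
      apply: le_trans H; rewrite le_eqVlt; apply/orP; left; apply/eqP.
      by apply: eq_bigr => x /andP[_ /eqP e]; rewrite e /= -cat_rcons.
    rewrite (eq_bigl (fun x => K x && ((parity S x == -1) == true))); last by move=> x; rewrite eqb_id.
    by apply: ler_sum => x _; rewrite lerD2l ler_nat leq_maxl.
  apply: (@le_trans _ _ (\sum_(x | K x && ((parity S x == -1) == false)) (A (rcons P S) x ^+ 2 + (depth tp)%:R))).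
    rewrite (eq_bigl (fun x => K x && ((parity S x == -1) == false))); last by move=> x; rewrite eqbF_neg.
    have := IHp (rcons P S) _ (CFb false) (HKb false).
    move=> H; apply: le_trans H; rewrite le_eqVlt; apply/orP; left; apply/eqP.
    by apply: eq_bigr => x /andP[_ /eqP e]; rewrite e /= -cat_rcons.
  rewrite (eq_bigl (fun x => K x && ((parity S x == -1) == false))); last by move=> x; rewrite eqbF_neg.
  by apply: ler_sum => x _; rewrite lerD2l ler_nat leq_maxr.
have := keyD S CF0 HK.
rewrite -/D -[D.+1]addn1 natrD => H.
rewrite [X in _ <= X](eq_bigr (fun x => (A P x ^+ 2 + 1) + D%:R)); last by move=> x _; ring.
rewrite big_split [X in _ <= X]big_split /=; exact: lerD H (lexx _).
Qed.

Lemma leaf_eq (T : pdt n) x y :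
  (leaf_of T y == leaf_of T x) = sameP (path_queries T (leaf_of T x)) x y.
Proof.
elim: T => [|S tm IHm tp IHp] //=.
rewrite eqseq_cons !parity_pb !sgnE /sameP /= -/(sameP _ x y).
case: (eqVneq (pb S y) (pb S x)) => [e|ne] /=.
  by rewrite e; case: (pb S x) => /=; [apply: IHm | apply: IHp].
by [].
Qed.

Lemma leaf_vec_eq (T : pdt n) x i :
  leaf_vec T x i = if fx (path_queries T (leaf_of T x)) i then sgn (x i) else 0.
Proof.
rewrite /leaf_vec; set Q := path_queries T (leaf_of T x).
set C := [set y : input n | leaf_of T y == leaf_of T x].
have HC : forall y, (leaf_of T y == leaf_of T x) = (y \in C) by move=> y; rewrite inE.
rewrite (eq_bigl (fun y => y \in C)) //.
case: ifP => H.
  rewrite (eq_bigr (fun _ => sgn (x i))); last first.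
    move=> y; rewrite inE leaf_eq => Hs; by rewrite ((fxP _ _ H) _ _ Hs).
  rewrite sumr_const -[sgn (x i) *+ _]mulr_natr mulfK // pnatr_eq0 -lt0n card_gt0.
  by apply/set0Pn; exists x; rewrite inE.
rewrite (eq_bigr (fun y => 1 * sgn (y i))); last by move=> y _; rewrite mul1r.
rewrite (flip_sum (Q := Q) (K := fun y => y \in C)) ?H ?mul0r //.
by move=> y z Hyz; rewrite !inE !leaf_eq; apply/idP/idP => H1;
  [apply: sameP_trans H1 Hyz | apply: sameP_trans H1 _; rewrite sameP_sym].
Qed.

End Aux.

Theorem proposition1 (n : nat) (T : pdt n) :
  correlation_free T -> leaf_sq_expectation T <= (depth T)%:R.
Proof.
move=> CF.
have CF' : CFrel [::] T by move=> p Hp i j ne; rewrite cat0s; apply: CF.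
have := keyC (K := predT) CF' (fun _ _ _ => erefl).
have A0 : forall x : input n, A [::] x = 0.
  move=> x; apply: big1 => i /fxP H; exfalso.
  by have := H [ffun=> true] [ffun=> false] erefl; rewrite !ffunE.
move=> H.
rewrite [X in _ <= X](eq_bigr (fun x => (depth T)%:R)) in H; last by move=> x _; rewrite A0 expr0n add0r.
rewrite sumr_const card_ffun card_bool card_ord -[_ *+ (2 ^ n)]mulr_natr in H.
rewrite /leaf_sq_expectation ler_pdivrMr ?ltr0n ?expn_gt0 //.
apply: le_trans H; rewrite le_eqVlt; apply/orP; left; apply/eqP.
apply: eq_big => // x _; congr (_ ^+ 2).
rewrite cat0s /A [RHS]big_mkcond /=; apply: eq_bigr => i _; by rewrite leaf_vec_eq.
Qed.
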